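(* In the setting of the blurring mean-shift iteration with $f$ PDD and fixed positive weights, let $C_1^{(t)}$ be the convex hull of $\{x_1^{(t)},\dots,x_N^{(t)}\}$ and let $C_1=\bigcap_{t\ge 0}C_1^{(t)}$. Then for every vertex (extreme point) $v$ of $C_1$ there exists at least one index $j\in\{1,\dots,N\}$ such that $\lim_{t\to\infty}x_j^{(t)}=v$.
   Context: Setting: $x_1,\dots,x_N\in\mathbb{R}^p$, fixed weights $w_1,\dots,w_N>0$, and $f:\mathbb{R}^p\to[0,1]$ PDD, meaning: $f(u)=1$ iff $u=0$; $f(u)=\varphi(\|u\|)$ for some $\varphi:[0,\infty)\to[0,1]$; $\varphi$ is decreasing (non-increasing). The blurring mean-shift iteration is $x_i^{(0)}=x_i$ and $x_i^{(t+1)}=\frac{\sum_{j=1}^N f(x_i^{(t)}-x_j^{(t)})w_jx_j^{(t)}}{\sum_{j=1}^N f(x_i^{(t)}-x_j^{(t)})w_j}$. The convex hulls $C_1^{(t)}$ are nested decreasing in $t$. *)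

(* Defs.v *)
From Stdlib Require Import Reals Lra.
Open Scope R_scope.

(* A point of R^p is represented by its coordinate function nat -> R;
   only the coordinates k < p are meaningful (all definitions below only
   look at coordinates k < p). *)
Definition vec := nat -> R.

Fixpoint sum_to (n : nat) (g : nat -> R) : R :=
  match n with
  | O => 0
  | S m => sum_to m g + g m
  end.

Definition veq (p : nat) (u v : vec) : Prop := forall k, (k < p)%nat -> u k = v k.

Definition vsub (u v : vec) : vec := fun k => u k - v k.

Definition vnorm (p : nat) (u : vec) : R := sqrt (sum_to p (fun k => u k * u k)).

Definition kern (p : nat) (phi : R -> R) (u : vec) : R := phi (vnorm p u).

Definition PDD (p : nat) (phi : R -> R) : Prop :=
  (forall r, 0 <= r -> 0 <= phi r <= 1) /\
  (forall r s, 0 <= r -> r <= s -> phi s <= phi r) /\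
  (forall u : vec, kern p phi u = 1 <-> veq p u (fun _ => 0)).

Definition bms_step (p N : nat) (phi : R -> R) (w : nat -> R) (X : nat -> vec)
  : nat -> vec :=
  fun i k =>
    sum_to N (fun j => kern p phi (vsub (X i) (X j)) * w j * X j k) /
    sum_to N (fun j => kern p phi (vsub (X i) (X j)) * w j).

Fixpoint bms (p N : nat) (phi : R -> R) (w : nat -> R) (x : nat -> vec) (t : nat)
  : nat -> vec :=
  match t with
  | O => x
  | S t' => bms_step p N phi w (bms p N phi w x t')
  end.

Definition in_hull (p N : nat) (X : nat -> vec) (y : vec) : Prop :=
  exists lam : nat -> R,
    (forall j, (j < N)%nat -> 0 <= lam j) /\
    sum_to N lam = 1 /\
    veq p y (fun k => sum_to N (fun j => lam j * X j k)).

Definition C1_set (p N : nat) (phi : R -> R) (w : nat -> R) (x : nat -> vec) (y : vec) : Prop :=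
  forall t : nat, in_hull p N (bms p N phi w x t) y.

Definition extreme_point (p : nat) (S : vec -> Prop) (v : vec) : Prop :=
  S v /\
  forall a b (s : R), S a -> S b -> 0 < s < 1 ->
    veq p v (fun k => s * a k + (1 - s) * b k) -> veq p a v /\ veq p b v.

Definition vconv (p : nat) (u : nat -> vec) (v : vec) : Prop :=
  forall k, (k < p)%nat -> Un_cv (fun t => u t k) (v k).

(* Main.v *)
Require Import Defs.
From Stdlib Require Import Reals IndefiniteDescription Classical FunctionalExtensionality.
From mathcomp Require Import all_boot all_order ssralg ssrnum fingroup perm archimedean.
From mathcomp Require Import Rstruct ring lra.
Import Order.TTheory GRing.Theory Num.Theory.
Set Implicit Arguments. Unset Strict Implicit. Unset Printing Implicit Defensive.


Local Open Scope ring_scope.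

Section Rank.
Variable N : nat.
Implicit Types (z : 'I_N -> R).

Definition rnk z (i : 'I_N) : nat :=
  addn #|[set j | z i < z j]| #|[set j | (z j == z i) && (j < i)%N]|.

Lemma rnk_le z i (A : {set 'I_N}) :
  (forall j, z i < z j -> j \in A) ->
  (forall j, z j == z i -> (j < i)%N -> j \in A) ->
  i \in A -> (rnk z i < #|A|)%N.
Proof.
move=> h1 h2 hi; rewrite /rnk.
set X := [set j | z i < z j]; set Y := [set j | (z j == z i) && (j < i)%N].
have dXY : [disjoint X & Y].
  apply/pred0P => j /=; rewrite !inE; apply/negbTE; apply/negP => /andP [h /andP [/eqP e _]].
  by rewrite e ltxx in h.
rewrite -cardsUI. have -> : X :&: Y = set0.
  by apply/setP => j; rewrite !inE; apply/negbTE; apply/negP => /andP [h /andP [/eqP e _]]; rewrite e ltxx in h.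
rewrite cards0 addn0.
apply: (@leq_ltn_trans #|A :\ i|); last by rewrite (cardsD1 i A) hi.
apply: subset_leq_card; apply/subsetP => j; rewrite !inE => /orP [h|/andP [e l]].
  rewrite h1 // andbT. by apply/eqP => ej; rewrite ej ltxx in h.
rewrite h2 // andbT. by apply/eqP => ej; rewrite ej ltnn in l.
Qed.

Lemma rnk_lt z i : (rnk z i < N)%N.
Proof.
have := @rnk_le z i [set: 'I_N]; rewrite cardsT card_ord; apply => *; by rewrite inE.
Qed.

Lemma rnk_ltz z i j : z i < z j -> (rnk z j < rnk z i)%N.
Proof.
move=> hij. rewrite {2}/rnk.
apply: (@leq_trans #|[set k | z j <= z k]|).
  apply: rnk_le.
  - by move=> k h; rewrite inE ltW.
  - by move=> k /eqP e _; rewrite inE e.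
  - by rewrite inE.
apply: leq_trans (leq_addr _ _).
apply: subset_leq_card; apply/subsetP => k; rewrite !inE => h. exact: lt_le_trans hij h.
Qed.

Lemma rnk_eqz z i j : z i = z j -> (i < j)%N -> (rnk z i < rnk z j)%N.
Proof.
move=> e lij. rewrite /rnk.
have -> : [set k | z j < z k] = [set k | z i < z k] by apply/setP => k; rewrite !inE e.
rewrite ltn_add2l. apply: proper_card.
apply/properP; split.
  apply/subsetP => k; rewrite !inE => /andP [/eqP h l]. rewrite h e eqxx /=. exact: ltn_trans l lij.
exists i; first by rewrite inE e eqxx lij.
by rewrite inE ltnn andbF.
Qed.

Lemma rnk_inj z : injective (rnk z).
Proof.
move=> i j e.
case: (ltgtP (z i) (z j)) => h.
- by have := rnk_ltz h; rewrite e ltnn.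
- by have := rnk_ltz h; rewrite e ltnn.
- case: (ltngtP i j) => l.
  + by have := rnk_eqz h l; rewrite e ltnn.
  + by have := rnk_eqz (esym h) l; rewrite e ltnn.
  + exact: val_inj.
Qed.

Definition rko z (i : 'I_N) : 'I_N := Ordinal (rnk_lt z i).
Lemma rko_inj z : injective (rko z).
Proof. by move=> i j /(congr1 val) /= /rnk_inj. Qed.
Definition rkp z : {perm 'I_N} := perm (@rko_inj z).
Lemma rkpE z i : rkp z i = rko z i.
Proof. by rewrite permE. Qed.

Lemma rk_mono z i j : (rkp z i < rkp z j)%N -> z j <= z i.
Proof.
rewrite !rkpE /= => h. rewrite leNgt; apply/negP => hz.
by have := rnk_ltz hz; rewrite ltnNge ltnW.
Qed.

End Rank.


Local Open Scope ring_scope.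

Section Geom.
Variable b : R.
Hypothesis hb0 : 0 < b.
Hypothesis hb1 : b <= 1/4.
Local Ltac pre := have ? := hb0; have ? := hb1.

Lemma geom_sum n : (1 - b) * \sum_(k < n) b ^+ k = 1 - b ^+ n.
Proof.
elim: n => [|n IH]; first by rewrite big_ord0 expr0; lra.
rewrite big_ord_recr /= mulrDr IH exprS. ring.
Qed.

Lemma pow_le m n : (m <= n)%N -> b ^+ n <= b ^+ m.
Proof. move=> h; pre; apply: (ler_wiXn2l (x:=b)); [lra|lra|exact: h]. Qed.

Lemma pow_ge0 n : 0 <= b ^+ n. Proof. pre; apply: exprn_ge0; lra. Qed.
Lemma pow_gt0 n : 0 < b ^+ n. Proof. exact: exprn_gt0. Qed.

Lemma tail_le m n : (m <= n)%N ->
  \sum_(k < n) b ^+ k - \sum_(k < m) b ^+ k <= 4/3 * b ^+ m.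
Proof.
move=> mn. pre.
have h1 := geom_sum n; have h2 := geom_sum m.
have hn := pow_ge0 n.
have h : (1 - b) * (\sum_(k < n) b ^+ k - \sum_(k < m) b ^+ k) <= b ^+ m.
  rewrite mulrBr h1 h2. lra.
move: h. set D := \sum_(k < n) b ^+ k - \sum_(k < m) b ^+ k. move=> h.
have hm := pow_ge0 m.
have hD : 0 <= D.
  rewrite /D (big_ord_widen n _ mn).
  rewrite [X in X - _](bigID (fun k : 'I_n => (k < m)%N)) /=.
  suff : 0 <= \sum_(i < n | ~~ (i < m)%N) b ^+ i by lra.
  by apply: sumr_ge0 => i _; apply: pow_ge0.
nra.
Qed.

Lemma sum_geom_ge0 n : 0 <= \sum_(k < n) b ^+ k.
Proof. by apply: sumr_ge0 => i _; apply: pow_ge0. Qed.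

End Geom.

Section Major.
Variable N : nat.
Variable a : 'I_N -> 'I_N -> R.
Variables c K b : R.
Hypothesis ha0 : forall i j, 0 <= a i j.
Hypothesis ha1 : forall i, \sum_j a i j = 1.
Hypothesis hdiag : forall i, c <= a i i.
Hypothesis hsym : forall i j, a i j <= K * a j i.
Hypothesis hb0 : 0 < b.
Hypothesis hbK : b * K <= 1.
Hypothesis hbc : 4 * b <= c.
Hypothesis hc1 : c <= 1.
Local Ltac pre := have ? := hb0; have ? := hbK; have ? := hbc; have ? := hc1.

Lemma hb14 : b <= 1/4. Proof. pre; lra. Qed.

Implicit Types (S : {set 'I_N}) (i j : 'I_N).
Definition aS (S : {set 'I_N}) i := \sum_(j in S) a i j.

Lemma aS_split S i : aS S i + \sum_(j in ~: S) a i j = 1.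
Proof.
rewrite -(ha1 i) [RHS](bigID (fun j => j \in S)) /= /aS.
congr (_ + _); apply: eq_bigl => j; by rewrite inE.
Qed.

Lemma aS_ge0 S i : 0 <= aS S i.
Proof. by apply: sumr_ge0 => j _. Qed.

Lemma aSc_ge0 S i : 0 <= \sum_(j in ~: S) a i j.
Proof. by apply: sumr_ge0 => j _. Qed.

Lemma aS_le1 S i : aS S i <= 1.
Proof. have := aS_split S i; have := aSc_ge0 S i. lra. Qed.

Lemma aS_out S i : i \notin S -> aS S i <= 1 - c.
Proof.
move=> hi. have := aS_split S i.
have : a i i <= \sum_(j in ~: S) a i j.
  rewrite (bigD1 i) /=; last by rewrite inE.
  have : 0 <= \sum_(j in ~: S | j != i) a i j by apply: sumr_ge0.
  lra.
have := hdiag i. lra.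
Qed.

Lemma K_ge0 i : 0 <= K.
Proof. have h1 := hsym i i; have h2 := hdiag i. pre. have ha : 0 < a i i by lra. nra. Qed.

Variable r : {perm 'I_N}.
Local Notation B i := (b ^+ (r i)).

Lemma sumB_lt m : (m <= N)%N -> \sum_(i | (r i < m)%N) B i = \sum_(k < m) b ^+ k.
Proof.
move=> mN. rewrite (big_ord_widen N _ mN).
by rewrite [RHS](reindex_inj (@perm_inj _ r)) /=.
Qed.

Lemma sumB_all : \sum_i B i = \sum_(k < N) b ^+ k.
Proof. by rewrite [RHS](reindex_inj (@perm_inj _ r)) /=. Qed.

Lemma card_rlt m : (m <= N)%N -> #|[set i | (r i < m)%N]| = m.
Proof.
move=> mN.
have -> : [set i | (r i < m)%N] = r @^-1: [set k : 'I_N | (k < m)%N].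
  by apply/setP => i; rewrite !inE.
rewrite card_preimset; last exact: perm_inj.
rewrite -sum1_card.
rewrite (eq_bigl (fun k : 'I_N => (k < m)%N)); last by move=> k; rewrite inE.
rewrite -(big_ord_widen N (fun=> 1%N) mN).
by rewrite sum1_card card_ord.
Qed.

Definition kappa := c / 2 * b ^+ N.

Lemma major_strict (S : {set 'I_N}) i0 :
  (r i0 < #|S|)%N -> i0 \notin S ->
  \sum_i B i * aS S i <= \sum_(k < #|S|) b ^+ k - kappa.
Proof.
move=> hr hi0. pre.
have hSN : (#|S| <= N)%N by have := max_card S; rewrite card_ord.
rewrite (bigD1 i0) //=.
have h1 : \sum_(i | i != i0) B i * aS S i <= \sum_(i | i != i0) B i.
  apply: ler_sum => i _. have := aS_le1 S i; have := aS_ge0 S i; have := pow_ge0 hb0 hb14 (r i).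
  nra.
have h2 : B i0 * aS S i0 <= B i0 * (1 - c).
  apply: ler_wpM2l; [exact: (pow_ge0 hb0 hb14 (r i0))|exact: aS_out].
have h3 : \sum_i B i = B i0 + \sum_(i | i != i0) B i by rewrite (bigD1 i0).
rewrite sumB_all in h3.
have h4 := tail_le hb0 hb14 hSN.
have h5 : b ^+ #|S| <= b * B i0.
  rewrite -exprS. exact: (pow_le hb0 hb14 hr).
have h6 : b ^+ N <= B i0 by exact: (pow_le hb0 hb14 (ltnW (ltn_ord _))).
have h7 := pow_ge0 hb0 hb14 (r i0).
rewrite /kappa.
have hc0 : 0 <= c by lra.
nra.
Qed.

Lemma major (S : {set 'I_N}) :
  \sum_i B i * aS S i <= \sum_(k < #|S|) b ^+ k.
Proof. pre.
have hSN : (#|S| <= N)%N by have := max_card S; rewrite card_ord.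
case: (boolP [exists i, (r i < #|S|)%N && (i \notin S)]).
  case/existsP => i0 /andP [h1 h2].
  have := major_strict h1 h2. have : 0 <= kappa.
    rewrite /kappa; have := pow_ge0 hb0 hb14 N; nra.
  lra.
rewrite negb_exists => /forallP hall.
have hsub : [set i | (r i < #|S|)%N] \subset S.
  apply/subsetP => i; rewrite inE => hi.
  have := hall i; rewrite negb_and hi /= negbK; done.
have eqS : [set i | (r i < #|S|)%N] = S.
  apply/eqP; rewrite eqEcard hsub /= card_rlt ?leqnn //.
have hin i : (i \in S) = (r i < #|S|)%N.
  by rewrite -{1}eqS inE.
rewrite (bigID (fun i => i \in S)) /=.
set m := #|S|.
have hout : \sum_(i | i \notin S) B i * aS S i <=
            \sum_(i in S) (b ^+ m * K) * (1 - aS S i).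
  apply: (@le_trans _ _ (\sum_(i | i \notin S) b ^+ m * aS S i)).
    apply: ler_sum => i hi. apply: ler_wpM2r; first exact: aS_ge0.
    have hmi : (m <= r i)%N by rewrite leqNgt -hin.
    exact: (pow_le hb0 hb14 hmi).
  rewrite -mulr_sumr -[X in _ <= X]mulr_sumr -mulrA.
  apply: ler_wpM2l; first exact: (pow_ge0 hb0 hb14 m).
  rewrite mulr_sumr.
  apply: (@le_trans _ _ (\sum_(i | i \notin S) \sum_(j in S) K * a j i)).
    apply: ler_sum => i _; rewrite /aS; apply: ler_sum => j _; exact: hsym.
  rewrite exchange_big /=. apply: ler_sum => j hj.
  rewrite -mulr_sumr. apply: ler_wpM2l; first exact: (K_ge0 j).
  have := aS_split S j.
  have -> : \sum_(j0 in ~: S) a j j0 = \sum_(i | i \notin S) a j i.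
    by apply: eq_bigl => i; rewrite inE.
  lra.
have hout2 : \sum_(i in S) (b ^+ m * K) * (1 - aS S i) <= \sum_(i in S) B i * (1 - aS S i).
  apply: ler_sum => i hi. apply: ler_wpM2r; first by have := aS_le1 S i; lra.
  have hri : (r i < m)%N by rewrite -hin.
  have : b ^+ m <= b * B i by rewrite -exprS; exact: (pow_le hb0 hb14 hri).
  have := pow_ge0 hb0 hb14 (r i).
  have hK := K_ge0 i.
  nra.
have hsum : \sum_(i in S) B i * aS S i + \sum_(i in S) B i * (1 - aS S i) = \sum_(k < m) b ^+ k.
  rewrite -big_split /=.
  rewrite (eq_bigr (fun i => B i)); last by move=> i _; ring.
  rewrite -(sumB_lt hSN). apply: eq_bigl => i. by rewrite hin.
lra.
Qed.

End Major.


Local Open Scope ring_scope.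

Lemma abel_gen (F e y : nat -> R) n :
  (forall m, F m.+1 = F m + e m) -> F 0%N = 0 ->
  \sum_(k < n.+1) e k * y k =
  \sum_(m < n) F m.+1 * (y m - y m.+1) + F n.+1 * y n.
Proof.
move=> hF h0.
elim: n => [|n IH].
  by rewrite big_ord0 !big_ord1 add0r hF h0 add0r.
rewrite big_ord_recr /= IH.
rewrite [in RHS]big_ord_recr /=.
rewrite [F n.+2]hF. ring.
Qed.

Lemma abel (e y : nat -> R) n :
  \sum_(k < n.+1) e k * y k =
  \sum_(m < n) (\sum_(k < m.+1) e k) * (y m - y m.+1) + (\sum_(k < n.+1) e k) * y n.
Proof.
apply: (abel_gen (F := fun m => \sum_(k < m) e k)).
- by move=> m; rewrite big_ord_recr.
- by rewrite big_ord0.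
Qed.

Section Phi.
Variable n : nat.
Local Notation N := n.+1.
Implicit Types (z : 'I_N -> R).

Definition Phi (b : R) z := \sum_i b ^+ (rkp z i) * z i.
Definition Az (a : 'I_N -> 'I_N -> R) z i := \sum_j a i j * z j.
Definition ys z (k : nat) := z (((rkp z)^-1)%g (inord k)).
Definition U z (m : nat) := [set j | (rkp z j < m)%N].

Lemma sum_inord (F : 'I_N -> R) : \sum_i F i = \sum_(k < N) F (inord k).
Proof. by apply: eq_bigr => i _; rewrite inord_val. Qed.

Lemma Phi_ys b z : Phi b z = \sum_(k < N) b ^+ k * ys z k.
Proof.
rewrite /Phi (reindex_inj (@perm_inj _ ((rkp z)^-1)%g)) /= sum_inord.
apply: eq_bigr => k _. by rewrite permKV /ys inordK ?ltn_ord.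
Qed.

Lemma ys_mono z k k' : (k <= k')%N -> (k' < N)%N -> ys z k' <= ys z k.
Proof.
rewrite leq_eqVlt => /orP [/eqP -> //|hk] hk'.
apply: rk_mono. rewrite !permKV !inordK //. exact: ltn_trans hk hk'.
Qed.

Lemma card_U z m : (m <= N)%N -> #|U z m| = m.
Proof. move=> h; exact: (card_rlt (rkp z) h). Qed.

Variables (a : 'I_N -> 'I_N -> R) (c K b : R).
Hypothesis ha0 : forall i j, 0 <= a i j.
Hypothesis ha1 : forall i, \sum_j a i j = 1.
Hypothesis hdiag : forall i, c <= a i i.
Hypothesis hsym : forall i j, a i j <= K * a j i.
Hypothesis hb0 : 0 < b.
Hypothesis hbK : b * K <= 1.
Hypothesis hbc : 4 * b <= c.
Hypothesis hc1 : c <= 1.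

Section Z.
Variable z : 'I_N -> R.
Let r := rkp (Az a z).
Let cc j := \sum_i b ^+ (r i) * a i j.
Let d j := b ^+ (rkp z j) - cc j.
Let e k := d (((rkp z)^-1)%g (inord k)).
Let E m := \sum_(k < m) e k.

Lemma Phi_diff : Phi b z - Phi b (Az a z) = \sum_(k < N) e k * ys z k.
Proof.
have -> : Phi b (Az a z) = \sum_j cc j * z j.
  rewrite /Phi /Az /cc.
  under eq_bigr do rewrite mulr_sumr.
  rewrite exchange_big /=. apply: eq_bigr => j _. rewrite mulr_suml.
  apply: eq_bigr => i _. by rewrite mulrA.
rewrite /Phi -sumrB.
rewrite (reindex_inj (@perm_inj _ ((rkp z)^-1)%g)) /= sum_inord.
apply: eq_bigr => k _. rewrite /e /d /ys. rewrite inord_val. ring.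
Qed.

Lemma sumc_S (S : {set 'I_N}) : \sum_(j in S) cc j = \sum_i b ^+ (r i) * aS a S i.
Proof.
rewrite /cc exchange_big /=. apply: eq_bigr => i _. by rewrite /aS mulr_sumr.
Qed.

Lemma E_eq m : (m <= N)%N -> E m = \sum_(k < m) b ^+ k - \sum_(j in U z m) cc j.
Proof.
move=> mN. rewrite /E /e /d.
rewrite (big_ord_widen N (fun k => d (((rkp z)^-1)%g (inord k))) mN).
rewrite -(sumB_lt b (rkp z) mN).
have -> : \sum_(j in U z m) cc j = \sum_(i | (rkp z i < m)%N) cc i.
  by apply: eq_bigl => j; rewrite inE.
rewrite -sumrB.
rewrite [RHS](reindex_inj (@perm_inj _ ((rkp z)^-1)%g)) /=.
apply: eq_big => [k|k _]; first by rewrite permKV.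
by rewrite inord_val /d permKV.
Qed.

Lemma E_ge0 m : (m <= N)%N -> 0 <= E m.
Proof.
move=> mN. rewrite E_eq // sumc_S.
have := major ha0 ha1 hdiag hsym hb0 hbK hbc hc1 r (U z m).
rewrite card_U //. lra.
Qed.

Lemma E_N : E N = 0.
Proof.
rewrite E_eq //.
have -> : U z N = setT by apply/setP => j; rewrite !inE ltn_ord.
have -> : \sum_(j in [set: 'I_N]) cc j = \sum_j cc j by apply: eq_bigl => j; rewrite inE.
rewrite /cc exchange_big /=.
rewrite [X in _ - X](eq_bigr (fun i => b ^+ r i)); last by move=> i _; rewrite -mulr_sumr ha1 mulr1.
rewrite (sumB_all b r). by rewrite subrr.
Qed.

Lemma E_strict m : (m <= N)%N -> U (Az a z) m != U z m -> kappa N c b <= E m.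
Proof.
move=> mN hne. rewrite E_eq // sumc_S.
have : ~~ (U (Az a z) m \subset U z m).
  apply/negP => hs. move/negP: hne; apply. rewrite eqEcard hs /= !card_U //.
case/subsetPn => i0 h1 h2.
have h1' : (r i0 < #|U z m|)%N by rewrite card_U //; move: h1; rewrite inE.
have := major_strict ha0 ha1 hdiag hb0 hbK hbc hc1 h1' h2.
rewrite card_U //. lra.
Qed.

Lemma Phi_dec : Phi b (Az a z) <= Phi b z.
Proof.
suff : 0 <= Phi b z - Phi b (Az a z) by lra.
rewrite Phi_diff abel.
have -> : \sum_(k < n.+1) e k = E N by [].
rewrite E_N mul0r addr0.
apply: sumr_ge0 => m _. apply: mulr_ge0; first by apply: E_ge0; rewrite ltnS ltnW.
rewrite subr_ge0. apply: ys_mono => //. by rewrite ltnS.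
Qed.

Lemma Phi_drop m : (m < n)%N -> U (Az a z) m.+1 != U z m.+1 ->
  kappa N c b * (ys z m - ys z m.+1) <= Phi b z - Phi b (Az a z).
Proof.
move=> hm hne.
rewrite Phi_diff abel.
have -> : \sum_(k < n.+1) e k = E N by [].
rewrite E_N mul0r addr0.
rewrite (bigD1 (Ordinal hm)) //=.
have hge : 0 <= \sum_(i < n | i != Ordinal hm) (\sum_(k < i.+1) e k) * (ys z i - ys z i.+1).
  apply: sumr_ge0 => i _. apply: mulr_ge0; first by apply: E_ge0; rewrite ltnS ltnW.
  rewrite subr_ge0. apply: ys_mono => //. by rewrite ltnS.
have hy : 0 <= ys z m - ys z m.+1 by rewrite subr_ge0; apply: ys_mono => //; rewrite ltnS.
have hE := E_strict (leqW hm) hne.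
have : kappa N c b * (ys z m - ys z m.+1) <= E m.+1 * (ys z m - ys z m.+1).
  by apply: ler_wpM2r.
rewrite /E. lra.
Qed.

End Z.
End Phi.


Local Open Scope ring_scope.

Definition cvg (u : nat -> R) (L : R) :=
  forall eps : R, 0 < eps -> exists T, forall t, (T <= t)%N -> `|u t - L| < eps.

Lemma cauchy_cvg (u : nat -> R) :
  (forall eps : R, 0 < eps -> exists T, forall t s, (T <= t)%N -> (T <= s)%N -> `|u t - u s| < eps) ->
  exists L, cvg u L.
Proof.
move=> h.
have hc : Cauchy_crit u.
  move=> eps /RltP heps. have [T hT] := h eps heps.
  exists T => t s /ssrnat.leP ht /ssrnat.leP hs. rewrite RdistE. apply/RltP. exact: hT.
have [L hL] := R_complete u hc.
exists L => eps heps. have /RltP heps' := heps.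
have [T hT] := hL eps heps'. exists T => t /ssrnat.leP ht.
have := hT t ht. rewrite RdistE => /RltP. done.
Qed.

Lemma dec_cvg (u : nat -> R) lb :
  (forall t, u t.+1 <= u t) -> (forall t, lb <= u t) -> exists L, cvg u L.
Proof.
move=> hd hb.
have h1 : Un_decreasing u by move=> t; apply/RleP; exact: hd.
have h2 : has_lb u.
  exists (- lb) => x [i ->]. rewrite /opp_seq RoppE. apply/RleP.
  have := hb i. lra.
have [L hL] := decreasing_cv u h1 h2.
exists L => eps heps. have /RltP heps' := heps.
have [T hT] := hL eps heps'. exists T => t /ssrnat.leP ht.
have := hT t ht. rewrite RdistE => /RltP. done.
Qed.

Lemma cvg_lin (u v : nat -> R) L1 L2 x y :
  cvg u L1 -> cvg v L2 -> cvg (fun t => x * u t + y * v t) (x * L1 + y * L2).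
Proof.
move=> hu hv eps heps.
set M := `|x| + `|y| + 1.
have hM : 0 < M by rewrite /M; have := normr_ge0 x; have := normr_ge0 y; lra.
have he : 0 < eps / M by apply: divr_gt0.
have [T1 h1] := hu _ he. have [T2 h2] := hv _ he.
exists (maxn T1 T2) => t ht.
have ht1 : (T1 <= t)%N by apply: leq_trans ht; exact: leq_maxl.
have ht2 : (T2 <= t)%N by apply: leq_trans ht; exact: leq_maxr.
have e1 := h1 t ht1. have e2 := h2 t ht2.
have -> : x * u t + y * v t - (x * L1 + y * L2) = x * (u t - L1) + y * (v t - L2) by ring.
apply: (le_lt_trans (ler_normD _ _)). rewrite !normrM.
have a1 : `|x| * `|u t - L1| <= `|x| * (eps / M) by apply: ler_wpM2l => //; exact: ltW.
have a2 : `|y| * `|v t - L2| <= `|y| * (eps / M) by apply: ler_wpM2l => //; exact: ltW.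
have hMe : M * (eps / M) = eps.
  rewrite mulrCA mulfV ?mulr1 //. by apply/negP => /eqP h0; rewrite h0 ltxx in hM.
have h3 : (`|x| + `|y|) * (eps / M) < M * (eps / M).
  rewrite ltr_pM2r //. rewrite /M; lra.
rewrite hMe in h3. nra.
Qed.

Lemma cvg_const (L : R) : cvg (fun _ => L) L.
Proof. move=> eps he; exists 0%N => t _. by rewrite subrr normr0. Qed.

Lemma cvg_shift (u : nat -> R) L : cvg u L -> cvg (fun t => u t.+1) L.
Proof. move=> h eps he. have [T hT] := h eps he. exists T => t ht. apply: hT. exact: leqW. Qed.

Lemma cvg_le (u v : nat -> R) L1 L2 :
  (forall t, u t <= v t) -> cvg u L1 -> cvg v L2 -> L1 <= L2.
Proof.
move=> h h1 h2. rewrite leNgt; apply/negP => hlt.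
have he : 0 < (L1 - L2) / 2 by apply: divr_gt0 => //; lra.
have [T1 e1] := h1 _ he. have [T2 e2] := h2 _ he.
have a1 := e1 (maxn T1 T2) (leq_maxl _ _). have a2 := e2 (maxn T1 T2) (leq_maxr _ _).
have := h (maxn T1 T2).
move: a1 a2; set p := u _; set q := v _.
rewrite !ltr_norml => /andP [a1 a1'] /andP [a2 a2'].
lra.
Qed.

Lemma cvg_unique (u : nat -> R) L1 L2 : cvg u L1 -> cvg u L2 -> L1 = L2.
Proof.
move=> h1 h2. apply/eqP; rewrite eq_le; apply/andP; split.
  by apply: (cvg_le (u:=u) (v:=u)).
by apply: (cvg_le (u:=u) (v:=u)).
Qed.

Lemma ev_all (P : nat -> nat -> Prop) n :
  (forall m, (m < n)%N -> exists T, forall t, (T <= t)%N -> P m t) ->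
  exists T, forall t, (T <= t)%N -> forall m, (m < n)%N -> P m t.
Proof.
elim: n => [|n IH] h.
  by exists 0%N => t _ m.
have [T1 h1] : exists T, forall t, (T <= t)%N -> forall m, (m < n)%N -> P m t.
  apply: IH => m hm; apply: h; exact: ltnW.
have [T2 h2] := h n (ltnSn n).
exists (maxn T1 T2) => t ht m hm.
have ht1 : (T1 <= t)%N by apply: leq_trans ht; exact: leq_maxl.
have ht2 : (T2 <= t)%N by apply: leq_trans ht; exact: leq_maxr.
rewrite ltnS leq_eqVlt in hm. case/orP: hm => [/eqP -> | hm].
  exact: h2.
exact: h1.
Qed.


Local Open Scope ring_scope.

Lemma cvg_ext (u v : nat -> R) L : (forall t, u t = v t) -> cvg u L -> cvg v L.
Proof. move=> h hu eps he; have [T hT] := hu eps he; exists T => t ht; rewrite -h; exact: hT. Qed.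

Section Dyn.
Variable n : nat.
Local Notation N := n.+1.
Variable a : nat -> 'I_N -> 'I_N -> R.
Variables c K : R.
Hypothesis ha0 : forall t i j, 0 <= a t i j.
Hypothesis ha1 : forall t i, \sum_j a t i j = 1.
Hypothesis hdiag : forall t i, c <= a t i i.
Hypothesis hsym : forall t i j, a t i j <= K * a t j i.
Hypothesis hc0 : 0 < c.
Hypothesis hc1 : c <= 1.
Variable z : nat -> 'I_N -> R.
Hypothesis hz : forall t, z t.+1 = Az (a t) (z t).

Lemma K_ge1 : 1 <= K.
Proof.
have h1 := hsym 0 ord0 ord0; have h2 := hdiag 0 ord0; have := hc0.
move=> *. have : 0 < a 0%N ord0 ord0 by lra. nra.
Qed.

Definition b0 := c / (4 * K).

Lemma b0_gt0 : 0 < b0.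
Proof. have := K_ge1; have := hc0 => *. apply: divr_gt0 => //; lra. Qed.

Lemma b_ok b : 0 < b -> b <= b0 -> b * K <= 1 /\ 4 * b <= c.
Proof.
move=> hb hb'. have hK := K_ge1. have := hc0; have := hc1 => *.
have e : b0 * (4 * K) = c by rewrite /b0 mulfVK //; apply/negP => /eqP h0; lra.
split; nra.
Qed.

Definition Bd := \sum_i `|z 0%N i|.

Lemma z_bound t i : `|z t i| <= Bd.
Proof.
elim: t i => [|t IH] i.
  rewrite /Bd (bigD1 i) //=. have : 0 <= \sum_(j | j != i) `|z 0%N j| by apply: sumr_ge0.
  lra.
rewrite hz /Az.
apply: (le_trans (ler_norm_sum _ _ _)).
apply: (@le_trans _ _ (\sum_j a t i j * Bd)).
  apply: ler_sum => j _. rewrite normrM ger0_norm //. apply: ler_wpM2l => //.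
rewrite -mulr_suml ha1 mul1r. done.
Qed.

Lemma Bd_ge0 : 0 <= Bd.
Proof. by apply: sumr_ge0. Qed.

Lemma ys_bound t k : `|ys (z t) k| <= Bd.
Proof. exact: z_bound. Qed.

Definition Psi k b t := \sum_(l < N - k) b ^+ l * ys (z t) (k + l).

Lemma Psi0 b t : Psi 0 b t = Phi b (z t).
Proof. by rewrite /Psi subn0 Phi_ys. Qed.

Lemma Psi_rec k b t : (k < N)%N -> Psi k b t = ys (z t) k + b * Psi k.+1 b t.
Proof.
move=> hk. rewrite /Psi.
have -> : (N - k = (N - k.+1).+1)%N by rewrite subnS prednK // subn_gt0.
rewrite big_ord_recl /= expr0 mul1r addn0 mulr_sumr. congr (_ + _).
apply: eq_bigr => l _. rewrite /bump /= addnS addSn exprS. ring.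
Qed.

Lemma Psi_bound k b t : 0 < b -> b <= 1/4 -> `|Psi k b t| <= 4/3 * Bd.
Proof.
move=> hb hb1. rewrite /Psi.
apply: (le_trans (ler_norm_sum _ _ _)).
apply: (@le_trans _ _ (\sum_(l < N - k) b ^+ l * Bd)).
  apply: ler_sum => l _. rewrite normrM ger0_norm; last exact: (pow_ge0 hb hb1).
  apply: ler_wpM2l; [exact: (pow_ge0 hb hb1)| exact: ys_bound].
rewrite -mulr_suml.
have g := geom_sum b (N - k). have := pow_ge0 hb hb1 (N - k). have := Bd_ge0.
have := sum_geom_ge0 hb hb1 (N - k).
move: g. set S := \sum_(_ < _) _. move=> g h1 h2 h3.
have hS : S <= 4/3 by nra.
nra.
Qed.

Lemma Phi_mono b t : 0 < b -> b <= b0 -> Phi b (z t.+1) <= Phi b (z t).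
Proof.
move=> hb hb'. have [h1 h2] := b_ok hb hb'.
rewrite hz. exact: (Phi_dec (ha0 t) (ha1 t) (hdiag t) (hsym t) hb h1 h2 hc1).
Qed.

Lemma Psi0_cvg b : 0 < b -> b <= b0 -> exists L, cvg (Psi 0 b) L.
Proof.
move=> hb hb'. have [h1 h2] := b_ok hb hb'.
have hb4 : b <= 1/4 by have := hc1; lra.
apply: (@dec_cvg _ (- (4/3 * Bd))).
  move=> t. rewrite !Psi0. exact: Phi_mono.
move=> t. have := Psi_bound 0 t hb hb4. rewrite ler_norml => /andP [h _]. done.
Qed.

Lemma step_ys k : (k < N)%N ->
  (forall b, 0 < b -> b <= b0 -> exists L, cvg (Psi k b) L) ->
  exists Y, cvg (fun t => ys (z t) k) Y.
Proof.
move=> hk hP. apply: cauchy_cvg => eps he.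
have hB := Bd_ge0.
set b := Num.min b0 (eps / (8 * (Bd + 1))).
have hb0 := b0_gt0.
have hbpos : 0 < b.
  rewrite /b lt_min hb0 /=. apply: divr_gt0 => //. lra.
have hb' : b <= b0 by rewrite /b ge_min lexx.
have hb'' : b <= eps / (8 * (Bd + 1)) by rewrite /b ge_min lexx orbT.
have hb4 : b <= 1/4 by have [_ h2] := b_ok hbpos hb'; have := hc1; lra.
have [L hL] := hP b hbpos hb'.
have he4 : 0 < eps / 4 by apply: divr_gt0 => //.
have [T hT] := hL _ he4.
exists T => t s ht hs.
have e1 := hT t ht. have e2 := hT s hs.
rewrite (Psi_rec b t hk) in e1. rewrite (Psi_rec b s hk) in e2.
have p1 := Psi_bound k.+1 t hbpos hb4. have p2 := Psi_bound k.+1 s hbpos hb4.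
move: e1 e2 p1 p2.
set yt := ys _ k; set y_s := ys (z s) k; set Pt := Psi _ _ t; set Ps := Psi _ _ s.
rewrite !ltr_norml !ler_norml => /andP [e1 e1'] /andP [e2 e2'] /andP [p1 p1'] /andP [p2 p2'].
have hbB : b * (8/3 * Bd) <= 3/8 * eps.
  have : b * (8 * (Bd + 1)) <= eps.
    have h8 : 0 < 8 * (Bd + 1) by lra.
    have := ler_wpM2r (ltW h8) hb''. rewrite divfK //. by apply/negP => /eqP h0; lra.
  nra.
have hbPt : `|b * Pt - b * Ps| <= b * (8/3 * Bd).
  rewrite -mulrBr normrM ger0_norm; last exact: ltW.
  apply: ler_wpM2l; first exact: ltW.
  rewrite ler_norml; apply/andP; split; lra.
move: hbPt; rewrite ler_norml => /andP [q1 q2].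
apply/andP; split; lra.
Qed.

Lemma step_Psi k : (k < N)%N ->
  (forall b, 0 < b -> b <= b0 -> exists L, cvg (Psi k b) L) ->
  forall b, 0 < b -> b <= b0 -> exists L, cvg (Psi k.+1 b) L.
Proof.
move=> hk hP b hb hb'.
have [Y hY] := step_ys hk hP.
have [L hL] := hP b hb hb'.
exists (b^-1 * L + (- b^-1) * Y).
apply: (cvg_ext (u := fun t => b^-1 * Psi k b t + (- b^-1) * ys (z t) k)).
  move=> t. rewrite (Psi_rec b t hk). field. by apply/negP => /eqP h0; rewrite h0 ltxx in hb.
exact: cvg_lin.
Qed.

Lemma all_Psi k : (k <= N)%N -> forall b, 0 < b -> b <= b0 -> exists L, cvg (Psi k b) L.
Proof.
elim: k => [|k IH] hk.
  exact: Psi0_cvg.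
apply: step_Psi => //. apply: IH. exact: ltnW.
Qed.

Lemma ys_cvg k : (k < N)%N -> exists Y, cvg (fun t => ys (z t) k) Y.
Proof. move=> hk. apply: step_ys => //. apply: all_Psi. exact: ltnW. Qed.


Lemma gap_between (Y : nat -> R) k k' :
  (k < k')%N -> Y k' < Y k -> exists m, [/\ (k <= m)%N, (m < k')%N & Y m.+1 < Y m].
Proof.
elim: k' => // k' IH hk hY.
case: (ltP (Y k'.+1) (Y k')) => h.
  exists k'; split => //.
have hY' : Y k' < Y k by apply: le_lt_trans h hY.
have hk' : (k < k')%N.
  rewrite ltnS leq_eqVlt in hk. case/orP: hk => [/eqP e|] //.
  by rewrite e ltxx in hY'.
have [m [h1 h2 h3]] := IH hk' hY'. exists m; split => //. exact: ltnW.
Qed.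

Lemma Ys_ex : exists Y : nat -> R, forall k, (k < N)%N -> cvg (fun t => ys (z t) k) (Y k).
Proof.
have := @functional_choice nat R (fun k Y => (k < N)%N -> cvg (fun t => ys (z t) k) Y).
apply. move=> k. case: (ltnP k N) => hk.
  have [Y hY] := ys_cvg hk. by exists Y.
by exists 0.
Qed.

Lemma U_stable (Y : nat -> R) m : (m < n)%N ->
  cvg (fun t => ys (z t) m) (Y m) -> cvg (fun t => ys (z t) m.+1) (Y m.+1) ->
  Y m.+1 < Y m -> exists T, forall t, (T <= t)%N -> U (z t.+1) m.+1 = U (z t) m.+1.
Proof.
move=> hm h1 h2 hY.
set g := Y m - Y m.+1.
have hg : 0 < g by rewrite /g; lra.
have hb := b0_gt0.
have [hbK hbc] := b_ok hb (lexx _).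
set kap := kappa N c b0.
have hkap : 0 < kap.
  rewrite /kap /kappa. apply: mulr_gt0; first by apply: divr_gt0 => //.
  exact: exprn_gt0.
have [Lp hLp] := Psi0_cvg hb (lexx _).
have e1 : 0 < kap * g / 4 by apply: divr_gt0 => //; apply: mulr_gt0.
have [T1 hT1] := hLp _ e1.
have e2 : 0 < g / 4 by apply: divr_gt0.
have [T2 hT2] := h1 _ e2. have [T3 hT3] := h2 _ e2.
exists (maxn T1 (maxn T2 T3)) => t ht.
have ht1 : (T1 <= t)%N by apply: leq_trans ht; exact: leq_maxl.
have ht2 : (T2 <= t)%N by apply: leq_trans ht; apply: leq_trans (leq_maxr _ _); exact: leq_maxl.
have ht3 : (T3 <= t)%N by apply: leq_trans ht; apply: leq_trans (leq_maxr _ _); exact: leq_maxr.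
apply/eqP; apply/negPn/negP => hne.
rewrite hz in hne.
have hd := Phi_drop (ha0 t) (ha1 t) (hdiag t) (hsym t) hb hbK hbc hc1 hm hne.
rewrite -hz in hd.
have a1 := hT1 t ht1. have a2 := hT1 t.+1 (leqW ht1).
have a3 := hT2 t ht2. have a4 := hT3 t ht3.
rewrite !Psi0 in a1 a2.
move: a1 a2 a3 a4 hd. rewrite -/kap.
set P1 := Phi _ (z t); set P2 := Phi _ (z t.+1); set y1 := ys _ m; set y2 := ys _ m.+1.
rewrite !ltr_norml => /andP [a1 a1'] /andP [a2 a2'] /andP [a3 a3'] /andP [a4 a4'] hd.
have hyy : g / 2 <= y1 - y2 by rewrite /g in a3 a3' a4 a4' *; lra.
have : kap * (g / 2) <= kap * (y1 - y2) by apply: ler_wpM2l => //; exact: ltW.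
lra.
Qed.

Lemma z_ys t i : z t i = ys (z t) (rkp (z t) i).
Proof. by rewrite /ys inord_val permK. Qed.

Theorem dyn_cvg i : exists L, cvg (fun t => z t i) L.
Proof.
have [Y hY] := Ys_ex.
have Ymono k k' : (k <= k')%N -> (k' < N)%N -> Y k' <= Y k.
  move=> hk hk'. apply: (cvg_le (u := fun t => ys (z t) k') (v := fun t => ys (z t) k)).
  - move=> t; exact: ys_mono.
  - exact: hY.
  - apply: hY. exact: leq_ltn_trans hk hk'.
have [T1 hT1] : exists T, forall t, (T <= t)%N -> forall m, (m < n)%N ->
    Y m.+1 < Y m -> U (z t.+1) m.+1 = U (z t) m.+1.
  apply: (ev_all (P := fun m t => Y m.+1 < Y m -> U (z t.+1) m.+1 = U (z t) m.+1)).
  move=> m hm. case: (ltP (Y m.+1) (Y m)) => hlt.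
    have [T hT] := U_stable hm (hY m (ltn_trans hm (ltnSn n))) (hY m.+1 hm) hlt.
    by exists T => t ht _; apply: hT.
  by exists 0%N => t _.
set k := fun t => nat_of_ord (rkp (z t) i).
have hkN t : (k t < N)%N by apply: ltn_ord.
have hstep t : (T1 <= t)%N -> Y (k t.+1) = Y (k t).
  move=> ht. apply/eqP; rewrite eq_le; apply/andP; split.
  - rewrite leNgt; apply/negP => hlt.
    have hkk : (k t.+1 < k t)%N.
      rewrite ltnNge; apply/negP => hle. have := Ymono _ _ hle (hkN t.+1). rewrite leNgt hlt //.
    have [m [h1 h2 h3]] := gap_between hkk hlt.
    have hm : (m < n)%N by rewrite -ltnS; apply: leq_trans h2 (hkN t).
    have := hT1 t ht m hm h3. move/setP => /(_ i). rewrite !inE.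
    rewrite -/(k t) -/(k t.+1). have -> : (k t.+1 < m.+1)%N by rewrite ltnS.
    by rewrite ltnS leqNgt h2.
  - rewrite leNgt; apply/negP => hlt.
    have hkk : (k t < k t.+1)%N.
      rewrite ltnNge; apply/negP => hle. have := Ymono _ _ hle (hkN t). rewrite leNgt hlt //.
    have [m [h1 h2 h3]] := gap_between hkk hlt.
    have hm : (m < n)%N by rewrite -ltnS; apply: leq_trans h2 (hkN t.+1).
    have := hT1 t ht m hm h3. move/setP => /(_ i). rewrite !inE.
    rewrite -/(k t) -/(k t.+1). have -> : (k t < m.+1)%N by rewrite ltnS.
    by rewrite ltnS leqNgt h2.
have hconst t : (T1 <= t)%N -> Y (k t) = Y (k T1).
  elim: t => [|t IH] ht.
    by rewrite leqn0 in ht; rewrite (eqP ht).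
  rewrite leq_eqVlt in ht. case/orP: ht => [/eqP <- //|ht].
  rewrite hstep; last by rewrite -ltnS.
  apply: IH. by rewrite -ltnS.
exists (Y (k T1)) => eps he.
have [T2 hT2] := ev_all (P := fun k t => `|ys (z t) k - Y k| < eps) (n := N)
   (fun k hk => hY k hk eps he).
exists (maxn T1 T2) => t ht.
have ht1 : (T1 <= t)%N by apply: leq_trans ht; exact: leq_maxl.
have ht2 : (T2 <= t)%N by apply: leq_trans ht; exact: leq_maxr.
rewrite z_ys -(hconst t ht1). exact: hT2.
Qed.

End Dyn.


Local Open Scope ring_scope.

Lemma sum_toE M (g : nat -> R) : sum_to M g = \sum_(j < M) g j.
Proof.
elim: M => [|M IH] /=; first by rewrite big_ord0.
by rewrite big_ord_recr /= -IH.
Qed.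

Definition hull p M (X : nat -> vec) (y : vec) :=
  exists lam : nat -> R, (forall j, (j < M)%N -> 0 <= lam j) /\
    \sum_(j < M) lam j = 1 /\ forall k, (k < p)%N -> y k = \sum_(j < M) lam j * X j k.

Lemma in_hullE p M X y : in_hull p M X y <-> hull p M X y.
Proof.
split.
- case=> lam [h1 [h2 h3]]. exists lam; split.
    move=> j /ssrnat.ltP hj. apply/RleP. exact: h1.
  split; first by rewrite -sum_toE.
  move=> k /ssrnat.ltP hk. rewrite (h3 k hk) sum_toE. done.
- case=> lam [h1 [h2 h3]]. exists lam; split.
    move=> j /ssrnat.ltP hj. apply/RleP. exact: h1.
  split; first by rewrite sum_toE.
  move=> k /ssrnat.ltP hk. rewrite (h3 k hk) sum_toE. done.
Qed.

Lemma hull_pt p M X j : (j < M)%N -> hull p M X (X j).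
Proof.
move=> hj. exists (fun i => if i == j then 1 else 0). split.
  by move=> i _; case: (i == j).
split.
  rewrite (bigD1 (Ordinal hj)) //= eqxx big1 ?addr0 //.
  move=> i hi. have : (nat_of_ord i != j).
    by apply: contra hi => /eqP e; apply/eqP; apply: val_inj.
  by move/negbTE => ->.
move=> k hk. rewrite (bigD1 (Ordinal hj)) //= eqxx mul1r big1 ?addr0 //.
move=> i hi. have : (nat_of_ord i != j).
  by apply: contra hi => /eqP e; apply/eqP; apply: val_inj.
by move/negbTE => ->; rewrite mul0r.
Qed.

Lemma hull_trans p M M' (Y X : nat -> vec) y :
  hull p M Y y -> (forall i, (i < M)%N -> hull p M' X (Y i)) -> hull p M' X y.
Proof.
move=> [lam [h1 [h2 h3]]] hY.
have hex : forall i, exists L : nat -> R, (i < M)%N -> (forall j, (j < M')%N -> 0 <= L j) /\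
    \sum_(j < M') L j = 1 /\ forall k, (k < p)%N -> Y i k = \sum_(j < M') L j * X j k.
  move=> i. case: (ltnP i M) => hi.
    have [L hL] := hY i hi. by exists L.
  by exists (fun _ => 0).
have [Lam hL] := functional_choice _ hex.
exists (fun j => \sum_(i < M) lam i * Lam i j). split.
  move=> j hj. apply: sumr_ge0 => i _. apply: mulr_ge0; first exact: h1.
  by have [a _] := hL i (ltn_ord i); apply: a.
split.
  rewrite exchange_big /=. rewrite -h2. apply: eq_bigr => i _.
  have [_ [b _]] := hL i (ltn_ord i). by rewrite -mulr_sumr b mulr1.
move=> k hk. rewrite h3 //.
under [RHS]eq_bigr do rewrite mulr_suml.
rewrite [RHS]exchange_big /=. apply: eq_bigr => i _.
have [_ [_ c]] := hL i (ltn_ord i). rewrite c // mulr_sumr.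
apply: eq_bigr => j _. by rewrite mulrA.
Qed.


Local Open Scope ring_scope.

Definition cluster p (Z : nat -> vec) (v : vec) :=
  forall eps : R, 0 < eps -> forall T, exists t, (T <= t)%N /\
    forall k, (k < p)%N -> `|Z t k - v k| < eps.

Lemma cluster1 (s : nat -> R) : (forall t, 0 <= s t <= 1) ->
  exists L, 0 <= L <= 1 /\ forall eps, 0 < eps -> forall T, exists t, (T <= t)%N /\ `|s t - L| < eps.
Proof.
move=> hs.
pose E := fun x : R => forall T, exists t, (T <= t)%N /\ x <= s t.
have hb : bound E.
  exists 1 => x hx. have [t [_ h]] := hx 0%N. apply/RleP. have := hs t. lra.
have hE : exists x, E x.
  exists 0 => T. exists T; split => //. by have := hs T => /andP [].
have [L [hub hlub]] := completeness E hb hE.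
have L0 : 0 <= L.
  apply/RleP. apply: hub => T. exists T; split => //. by have := hs T => /andP [].
have L1 : L <= 1.
  apply/RleP. apply: hlub => x hx. have [t [_ h]] := hx 0%N. apply/RleP. have := hs t. lra.
exists L; split; first by apply/andP.
move=> eps he T.
have [x [hx hxL]] : exists x, E x /\ L - eps / 2 < x.
  apply: NNPP => hn.
  pose l1 := L - eps / 2.
  have hup : is_upper_bound E l1.
    move=> y hy. apply/RleP. rewrite leNgt; apply/negP => hlt. apply: hn. by exists y.
  have := hlub _ hup. move/RleP; rewrite /l1 => ?; lra.
have [T0 hT0] : exists T0, forall t, (T0 <= t)%N -> s t < L + eps / 2.
  apply: NNPP => hn.
  pose l2 := L + eps / 2.
  have hin : E l2.
    move=> T1. apply: NNPP => hn2. apply: hn. exists T1 => t ht.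
    rewrite ltNge; apply/negP => hle. apply: hn2. by exists t.
  have := hub _ hin. move/RleP; rewrite /l2 => ?; lra.
have [t [ht hxt]] := hx (maxn T T0).
exists t; split.
  apply: leq_trans ht; exact: leq_maxl.
have := hT0 t (leq_trans (leq_maxr _ _) ht).
rewrite ltr_norml => h. apply/andP; split; lra.
Qed.

Lemma est (A V x s L dl Q eps : R) :
  0 < 1 - L -> 1 - L <= 1 -> `|A - V| < dl -> `|s - L| < dl -> `|V - x| <= Q -> 0 <= Q ->
  dl <= (1 - L) / 2 -> dl * (4 * (1 + Q)) <= eps * ((1 - L) * (1 - L)) -> 0 < eps ->
  `|(A - s * x) / (1 - s) - (V - L * x) / (1 - L)| < eps.
Proof.
move=> hu hu1 h1 h2 h3 hQ h4 h5 he.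
have hs : (1 - L) / 2 <= 1 - s.
  move: h2; rewrite ltr_norml => /andP [a b]. lra.
have hs0 : 0 < 1 - s by lra.
have e : (A - s * x) / (1 - s) - (V - L * x) / (1 - L) =
    ((A - V) * (1 - L) + (V - x) * (s - L)) / ((1 - s) * (1 - L)).
  field. apply/andP; split; apply/negP => /eqP h0; lra.
rewrite e normrM normfV.
have hd : 0 < (1 - s) * (1 - L) by apply: mulr_gt0.
rewrite (gtr0_norm hd).
have hn : `|(A - V) * (1 - L) + (V - x) * (s - L)| <= dl * (1 - L) + Q * dl.
  apply: (le_trans (ler_normD _ _)). rewrite !normrM (gtr0_norm hu).
  have a1 : `|A - V| * (1 - L) <= dl * (1 - L) by apply: ler_wpM2r; [lra|exact: ltW].
  have a2 : `|V - x| * `|s - L| <= Q * dl.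
    apply: ler_pM; [exact: normr_ge0|exact: normr_ge0|exact: h3|exact: ltW].
  lra.
rewrite -(ltr_pM2r hd) mulrAC -mulrA mulfV ?mulr1; last by apply/negP => /eqP h0; lra.
have hdl0 : 0 <= dl by have := normr_ge0 (A - V); lra.
have : dl * (1 - L) + Q * dl <= dl * (1 + Q) by nra.
have : (1 - L) * (1 - L) / 2 <= (1 - s) * (1 - L) by nra.
move=> *. nra.
Qed.

Lemma hull_veq p M X (y v : vec) : (forall k, (k < p)%N -> v k = y k) -> hull p M X y -> hull p M X v.
Proof.
move=> h [lam [h1 [h2 h3]]]. exists lam; split => //; split => // k hk. by rewrite h // h3.
Qed.

Lemma hull_closed p M X : forall Z v, (forall t, hull p M X (Z t)) -> cluster p Z v -> hull p M X v.
Proof.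
elim: M => [|M IH] Z v hZ hc.
  case: (hZ 0%N) => lam [_ [h _]]. rewrite big_ord0 in h. by move: h; move/eqP; rewrite eq_sym oner_eq0.
have hex : forall t, exists lam : nat -> R, (forall j, (j < M.+1)%N -> 0 <= lam j) /\
    \sum_(j < M.+1) lam j = 1 /\ forall k, (k < p)%N -> Z t k = \sum_(j < M.+1) lam j * X j k.
  move=> t; exact: hZ.
have [lam hl] := functional_choice _ hex.
pose s t := lam t M.
have hsum t : \sum_(j < M) lam t j + s t = 1.
  have [_ [h _]] := hl t. by rewrite big_ord_recr /= in h.
have hsumM0 t : 0 <= \sum_(j < M) lam t j.
  apply: sumr_ge0 => j _. have [h _] := hl t. apply: h. exact: ltn_trans (ltn_ord j) (ltnSn M).
have hs t : 0 <= s t <= 1.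
  have [h _] := hl t. have := h M (ltnSn M). have := hsum t. have := hsumM0 t.
  rewrite /s => *. apply/andP; split; lra.
have hex2 : forall m : nat, exists t, (m <= t)%N /\ forall k, (k < p)%N -> `|Z t k - v k| < 1 / (m.+1)%:R.
  move=> m. have hm : 0 < 1 / (m.+1)%:R :> R by apply: divr_gt0 => //; rewrite ltr0n.
  exact: hc _ hm m.
have [phi hphi] := functional_choice _ hex2.
have [L [hL01 hL]] := cluster1 (s := fun m => s (phi m)) (fun m => hs (phi m)).
have key : forall dl : R, 0 < dl -> forall T, exists t, (T <= t)%N /\ `|s t - L| < dl /\
    forall k, (k < p)%N -> `|Z t k - v k| < dl.
  move=> dl hdl T.
  have h0 : 0 <= 1 / dl by apply: divr_ge0 => //; exact: ltW.
  have hb := archi_boundP h0.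
  set m0 := Num.Def.archi_bound (1 / dl) in hb.
  have [m' [hm' hs']] := hL dl hdl (maxn T m0).
  have [ht hZ'] := hphi m'.
  exists (phi m'); split.
    apply: leq_trans ht. apply: leq_trans hm'. exact: leq_maxl.
  split => // k hk.
  apply: lt_le_trans (hZ' k hk) _.
  have hm0 : (m0 <= m'.+1)%N by apply: leqW; apply: leq_trans hm'; exact: leq_maxr.
  have hr : (m0%:R : R) <= (m'.+1)%:R by rewrite ler_nat.
  have hr0 : (0 : R) < (m'.+1)%:R by rewrite ltr0n.
  have e1 : 1 / dl * dl = 1 by field; apply/negP => /eqP h; lra.
  have e2 : 1 / (m'.+1)%:R * (m'.+1)%:R = 1 :> R by field; apply/negP => /eqP h; lra.
  have h1 : 1 < dl * (m'.+1)%:R by nra.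
  have hq : 0 < 1 / (m'.+1)%:R :> R by apply: divr_gt0.
  move: e2 h1 hq. set q := 1 / _. set r := (m'.+1)%:R. move=> e2 h1 hq.
  have e3 : q * (dl * r) = dl by rewrite mulrCA e2 mulr1.
  have : q * 1 < q * (dl * r) by rewrite ltr_pM2l.
  rewrite mulr1 e3 => h. exact: ltW.
case: (eqVneq L 1) => hL1.
  apply: (@hull_veq _ _ _ (X M)); last exact: hull_pt.
  move=> k hk.
  set Q := \sum_(j < M) `|X j k - X M k|.
  have hQ : 0 <= Q by apply: sumr_ge0.
  have hbound : forall dl, 0 < dl -> `|v k - X M k| <= dl + dl * Q.
    move=> dl hdl. have [t [_ [h1 h2]]] := key dl hdl 0%N.
    have hz := h2 k hk.
    have [hl1 [hl2 hl3]] := hl t.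
    have hZM : Z t k - X M k = \sum_(j < M) lam t j * (X j k - X M k).
      rewrite hl3 // big_ord_recr /=.
      have -> : \sum_(j < M) lam t j * (X j k - X M k) = \sum_(j < M) lam t j * X j k - (\sum_(j < M) lam t j) * X M k.
        by rewrite mulr_suml -sumrB; apply: eq_bigr => j _; ring.
      have e := hsum t. rewrite /s in e.
      have -> : \sum_(j < M) lam t j = 1 - lam t M by lra.
      ring.
    have hle : `|Z t k - X M k| <= (1 - s t) * Q.
      rewrite hZM. apply: (le_trans (ler_norm_sum _ _ _)).
      rewrite /Q mulr_sumr. apply: ler_sum => j _.
      rewrite normrM. have hj0 : 0 <= lam t j by apply: hl1; exact: ltn_trans (ltn_ord j) (ltnSn M).
      rewrite (ger0_norm hj0). apply: ler_wpM2r => //.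
      have := hsum t. have : lam t j <= \sum_(j0 < M) lam t j0.
        rewrite (bigD1 j) //=. have : 0 <= \sum_(i < M | i != j) lam t i.
          apply: sumr_ge0 => i _. apply: hl1. exact: ltn_trans (ltn_ord i) (ltnSn M).
        lra.
      lra.
    move: h1. rewrite hL1 => h1.
    have h1' : 1 - s t <= dl by move: h1; rewrite ltr_norml => /andP [a b]; lra.
    have hq1 : (1 - s t) * Q <= dl * Q by apply: ler_wpM2r.
    have htri : `|v k - X M k| <= `|v k - Z t k| + `|Z t k - X M k|.
      have -> : v k - X M k = (v k - Z t k) + (Z t k - X M k) by ring.
      exact: ler_normD.
    have hz' : `|v k - Z t k| < dl by rewrite distrC.
    lra.
  apply/eqP; rewrite -subr_eq0 -normr_eq0. apply/eqP.
  apply: le_anti; apply/andP; split; last exact: normr_ge0.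
  rewrite leNgt; apply/negP => hpos.
  set D := `|v k - X M k| in hpos.
  have hd : 0 < D / (2 * (1 + Q)) by apply: divr_gt0 => //; lra.
  have := hbound _ hd.
  have e : D / (2 * (1 + Q)) + D / (2 * (1 + Q)) * Q = D / 2.
    field. apply/negP => /eqP h; lra.
  rewrite -/D e. lra.
have hLlt : L < 1 by move: hL01 => /andP [_ h]; rewrite lt_neqAle hL1.
have hu : 0 < 1 - L by lra.
have [t0 [_ [hs0 _]]] := key ((1 - L) / 2) (divr_gt0 hu (ltr0n _ 2)) 0%N.
have hM0 : (0 < M)%N.
  rewrite lt0n; apply/negP => /eqP hM.
  have h0 : \sum_(j < M) lam t0 j = 0.
    apply: big1 => j _. exfalso. have := ltn_ord j. by rewrite {2}hM.
  have := hsum t0. rewrite h0 add0r => e. rewrite e in hs0.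
  move: hs0. rewrite ltr_norml => /andP [a b]. lra.
pose W t := if s t < 1 then (fun k => (Z t k - s t * X M k) / (1 - s t)) else X 0%N.
have hW t : hull p M X (W t).
  rewrite /W. case: ifP => hst; last exact: hull_pt.
  have [hl1 [hl2 hl3]] := hl t.
  have hne : 1 - s t != 0 by apply/negP => /eqP h; lra.
  exists (fun j => lam t j / (1 - s t)). split.
    move=> j hj. apply: divr_ge0; last lra. apply: hl1. exact: ltn_trans hj (ltnSn M).
  split.
    rewrite -mulr_suml. have -> : \sum_(j < M) lam t j = 1 - s t by have := hsum t; lra.
    by rewrite mulfV.
  move=> k hk. rewrite hl3 // big_ord_recr /=.
  have -> : \sum_(j < M) lam t j / (1 - s t) * X j k = (\sum_(j < M) lam t j * X j k) / (1 - s t).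
    rewrite mulr_suml. apply: eq_bigr => j _. field. exact: hne.
  congr (_ / _). rewrite /s. ring.
pose w k := (v k - L * X M k) / (1 - L).
have hcW : cluster p W w.
  move=> eps he T.
  set Q := \sum_(k < p) `|v k - X M k|.
  have hQ : 0 <= Q by apply: sumr_ge0.
  pose dl := Num.min ((1 - L) / 2) (eps * ((1 - L) * (1 - L)) / (4 * (1 + Q))).
  have hdl : 0 < dl.
    rewrite /dl lt_min; apply/andP; split; first lra.
    apply: divr_gt0; last lra. apply: mulr_gt0 => //. nra.
  have hdl1 : dl <= (1 - L) / 2 by rewrite /dl ge_min lexx.
  have hdl2 : dl * (4 * (1 + Q)) <= eps * ((1 - L) * (1 - L)).
    have : dl <= eps * ((1 - L) * (1 - L)) / (4 * (1 + Q)) by rewrite /dl ge_min lexx orbT.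
    move=> h. have h4 : 0 < 4 * (1 + Q) by lra.
    have := ler_wpM2r (ltW h4) h. rewrite divfK //. by apply/negP => /eqP h0; lra.
  have [t [ht [h1 h2]]] := key dl hdl T.
  exists t; split => // k hk.
  have hst : s t < 1 by move: h1; rewrite ltr_norml => /andP [a b]; lra.
  rewrite /W hst /w.
  have hQk : `|v k - X M k| <= Q.
    rewrite /Q (bigD1 (Ordinal hk)) //=.
    have : 0 <= \sum_(i < p | i != Ordinal hk) `|v i - X M i| by apply: sumr_ge0.
    lra.
  have hL1p : 1 - L <= 1 by move: hL01 => /andP [a _]; lra.
  exact: (est hu hL1p (h2 k hk) h1 hQk hQ hdl1 hdl2 he).
have [mu [hm1 [hm2 hm3]]] := IH W w hW hcW.
exists (fun j => if (j < M)%N then (1 - L) * mu j else L). split.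
  move=> j hj. case: ifP => hjM; last by move: hL01 => /andP [h _].
  apply: mulr_ge0; [lra|exact: (hm1 j hjM)].
split.
  rewrite big_ord_recr /= ltnn.
  rewrite (eq_bigr (fun j : 'I_M => (1 - L) * mu j)); last by move=> j _; rewrite ltn_ord.
  by rewrite -mulr_sumr hm2; ring.
move=> k hk. rewrite big_ord_recr /= ltnn.
rewrite (eq_bigr (fun j : 'I_M => (1 - L) * (mu j * X j k))); last by move=> j _; rewrite ltn_ord mulrA.
rewrite -mulr_sumr -hm3 // /w. field. by apply/negP => /eqP h; lra.
Qed.


Local Open Scope ring_scope.

Fixpoint wmin (w : nat -> R) (m : nat) : R :=
  match m with O => w 0%N | S m' => Num.min (wmin w m') (w m) end.

Lemma wmin_le w m i : (i <= m)%N -> wmin w m <= w i.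
Proof.
elim: m => [|m IH] /= hi.
  by rewrite leqn0 in hi; rewrite (eqP hi).
rewrite leq_eqVlt in hi. case/orP: hi => [/eqP ->|hi].
  by rewrite ge_min lexx orbT.
rewrite ge_min IH //.
Qed.

Lemma wmin_gt0 w m : (forall i, (i <= m)%N -> 0 < w i) -> 0 < wmin w m.
Proof.
elim: m => [|m IH] /= h; first exact: h.
rewrite lt_min IH ?h //. move=> i hi; apply: h; exact: leqW.
Qed.

Lemma sum_to_ext M (g h : nat -> R) : (forall j, g j = h j) -> sum_to M g = sum_to M h.
Proof. move=> e. elim: M => //= M ->. by rewrite e. Qed.

Lemma vnorm_ge0 p u : 0 <= vnorm p u.
Proof. apply/RleP. exact: sqrt_pos. Qed.

Lemma vnorm_sym p u v : vnorm p (vsub u v) = vnorm p (vsub v u).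
Proof.
rewrite /vnorm. congr sqrt. apply: sum_to_ext => j. rewrite /vsub !RminusE !RmultE. ring.
Qed.

Section App.
Variables (p n : nat) (phi : R -> R) (w : nat -> R) (x : nat -> vec).
Local Notation N := n.+1.
Hypothesis Hw : forall j, (j < N)%N -> 0 < w j.
Hypothesis Hf : PDD p phi.
Implicit Types (t : nat).

Lemma hw j : (j < N)%N -> 0 < w j.
Proof. exact: Hw. Qed.

Definition X t := bms p N phi w x t.
Definition ff t i j := kern p phi (vsub (X t i) (X t j)).

Lemma ff01 t i j : 0 <= ff t i j <= 1.
Proof.
case: Hf => h01 _.
have hr : Rle 0 (vnorm p (vsub (X t i) (X t j))) by apply/RleP; exact: vnorm_ge0.
have [a b] := h01 _ hr.
apply/andP; split; apply/RleP; done.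
Qed.

Lemma ff_ii t i : ff t i i = 1.
Proof.
case: Hf => _ [_ hiff]. apply/hiff => k _. rewrite /vsub. by rewrite RminusE subrr.
Qed.

Lemma ff_sym t i j : ff t i j = ff t j i.
Proof. by rewrite /ff /kern vnorm_sym. Qed.

Definition Dn t (i : nat) := \sum_(j < N) ff t i j * w j.
Definition Wt := \sum_(j < N) w j.
Definition wm := wmin w n.

Lemma wm_gt0 : 0 < wm.
Proof. apply: wmin_gt0 => i hi. apply: hw. by rewrite ltnS. Qed.
Lemma wm_le i : (i < N)%N -> wm <= w i.
Proof. move=> h; apply: wmin_le. by rewrite -ltnS. Qed.

Lemma Dn_ge t (i : 'I_N) : w i <= Dn t i.
Proof.
rewrite /Dn (bigD1 i) //= ff_ii mul1r.
have : 0 <= \sum_(j < N | j != i) ff t i j * w j.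
  apply: sumr_ge0 => j _. apply: mulr_ge0; first by have /andP [] := ff01 t i j.
  exact: ltW (hw (ltn_ord j)).
lra.
Qed.

Lemma Dn_le t (i : nat) : Dn t i <= Wt.
Proof.
apply: ler_sum => j _. have /andP [a b] := ff01 t i j. have := hw (ltn_ord j). nra.
Qed.

Lemma Dn_gt0 t (i : 'I_N) : 0 < Dn t i.
Proof. have := Dn_ge t i; have := hw (ltn_ord i). lra. Qed.

Lemma Wt_ge t (i : 'I_N) : w i <= Wt.
Proof. have := Dn_ge t i; have := Dn_le t i. lra. Qed.

Definition am t (i j : 'I_N) := ff t i j * w j / Dn t i.
Definition cc := wm / Wt.
Definition KK := (Wt * Wt) / (wm * wm).

Lemma am0 t i j : 0 <= am t i j.
Proof.
apply: divr_ge0; last exact: ltW (Dn_gt0 t i).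
apply: mulr_ge0; first by have /andP [] := ff01 t i j.
exact: ltW (hw (ltn_ord j)).
Qed.

Lemma am1 t i : \sum_j am t i j = 1.
Proof.
rewrite /am -mulr_suml. rewrite -/(Dn t i). apply: mulfV.
by apply/negP => /eqP h; have := Dn_gt0 t i; rewrite h ltxx.
Qed.

Lemma Wt_gt0 : 0 < Wt.
Proof. have := Wt_ge 0 ord0; have := hw (ltn_ord (@ord0 n)). lra. Qed.

Lemma amdiag t i : cc <= am t i i.
Proof.
rewrite /am ff_ii mul1r /cc.
have hD := Dn_gt0 t i. have hW := Wt_gt0. have hm := wm_gt0.
have h1 := wm_le (ltn_ord i). have h2 := Dn_le t i.
rewrite ler_pdivrMr // mulrAC ler_pdivlMr //. nra.
Qed.

Lemma amsym t i j : am t i j <= KK * am t j i.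
Proof.
rewrite /am /KK ff_sym.
set F := ff t j i.
have hF : 0 <= F by have /andP [] := ff01 t j i.
have hDi := Dn_gt0 t i. have hDj := Dn_gt0 t j.
have hW := Wt_gt0. have hm := wm_gt0.
have hwi := wm_le (ltn_ord i). have hwj := wm_le (ltn_ord j).
have hDi' := Dn_ge t i. have hDj' := Dn_le t j.
have hwj' := Wt_ge t j.
have key : w j * Dn t j <= (Wt * Wt) / (wm * wm) * (w i * Dn t i).
  have e : (Wt * Wt) / (wm * wm) * (wm * wm) = Wt * Wt.
    rewrite divfK //. apply/negP => /eqP h. have : 0 < wm * wm by apply: mulr_gt0. by rewrite h ltxx.
  have hK : 0 <= (Wt * Wt) / (wm * wm) by apply: divr_ge0; nra.
  have a1 : w j * Dn t j <= Wt * Wt by nra.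
  have a2 : wm * wm <= w i * Dn t i by nra.
  have := ler_wpM2l hK a2. rewrite e. lra.
have hK : 0 <= (Wt * Wt) / (wm * wm) by apply: divr_ge0; nra.
set Kx := (Wt * Wt) / (wm * wm) in key hK *.
have hne : Dn t i != 0 /\ Dn t j != 0.
  by split; apply/negP => /eqP h; lra.
have e1 : F * w j / Dn t i = (F * (w j * Dn t j)) / (Dn t i * Dn t j).
  by field; case: hne => -> ->.
have e2 : Kx * (F * w i / Dn t j) = (F * (Kx * (w i * Dn t i))) / (Dn t i * Dn t j).
  by field; case: hne => -> ->.
rewrite e1 e2. rewrite ler_pM2r; last by rewrite invr_gt0 mulr_gt0.
by apply: ler_wpM2l.
Qed.

Lemma cc_gt0 : 0 < cc.
Proof. apply: divr_gt0; [exact: wm_gt0|exact: Wt_gt0]. Qed.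

Lemma cc_le1 : cc <= 1.
Proof.
rewrite /cc ler_pdivrMr ?mul1r; last exact: Wt_gt0.
have := wm_le (ltn_ord (@ord0 n)); have := Wt_ge 0 ord0. lra.
Qed.

Definition zk k t (i : 'I_N) := X t i k.

Lemma zk_step k t : zk k t.+1 = Az (am t) (zk k t).
Proof.
apply: functional_extensionality => i.
rewrite /zk /Az /am /X /= /bms_step -/(X t).
rewrite !sum_toE RdivE -/(ff t i).
rewrite mulr_suml. apply: eq_bigr => j _. rewrite /ff /Dn. rewrite !RmultE. field.
apply/negP => /eqP h. have := Dn_gt0 t i. rewrite /Dn /ff h ltxx. done.
Qed.

Lemma traj_cvg k (i : 'I_N) : exists L, cvg (fun t => X t i k) L.
Proof.
exact: (dyn_cvg (@am0) (@am1) (@amdiag) (@amsym) cc_gt0 cc_le1 (@zk_step k) i).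
Qed.

Lemma step_hull t i : (i < N)%N -> hull p N (X t) (X t.+1 i).
Proof.
move=> hi. set i' := Ordinal hi.
exists (fun j => am t i' (inord j)). split.
  move=> j _. exact: am0.
split.
  rewrite -(am1 t i'). apply: eq_bigr => j _. by rewrite inord_val.
move=> k hk. have := congr1 (fun f => f i') (zk_step k t). rewrite /zk /Az /= => ->.
apply: eq_bigr => j _. by rewrite inord_val.
Qed.

Lemma nested s t i : (i < N)%N -> hull p N (X s) (X (s + t) i).
Proof.
elim: t i => [|t IH] i hi.
  rewrite addn0. exact: hull_pt.
rewrite addnS. apply: (hull_trans (step_hull _ hi)) => j hj. exact: IH.
Qed.

Lemma y_ex : exists y : nat -> vec, forall i k, (i < N)%N -> cvg (fun t => X t i k) (y i k).
Proof.
have h : forall i, exists f : vec, forall k, (i < N)%N -> cvg (fun t => X t i k) (f k).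
  move=> i. case: (ltnP i N) => hi.
    have h2 : forall k, exists L, cvg (fun t => X t i k) L.
      move=> k. exact: (traj_cvg k (Ordinal hi)).
    have [f hf] := functional_choice _ h2. by exists f => k _.
  by exists (fun _ => 0) => k.
have [y hy] := functional_choice _ h. exists y => i k hi. exact: hy.
Qed.

Lemma cvg_cluster (Z : nat -> vec) (v : vec) :
  (forall k, (k < p)%N -> cvg (fun t => Z t k) (v k)) -> cluster p Z v.
Proof.
move=> h eps he T.
have [T0 hT0] := ev_all (P := fun k t => `|Z t k - v k| < eps) (n := p) (fun k hk => h k hk eps he).
exists (maxn T T0); split; first exact: leq_maxl.
move=> k hk. apply: hT0 => //. exact: leq_maxr.
Qed.

Lemma cvg_shiftn (u : nat -> R) L s : cvg u L -> cvg (fun t => u (s + t)%N) L.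
Proof.
move=> h eps he. have [T hT] := h eps he. exists T => t ht. apply: hT.
apply: leq_trans ht _. exact: leq_addl.
Qed.

Lemma y_in_hull (y : nat -> vec) i s : (i < N)%N -> (forall k, (k < p)%N -> cvg (fun t => X t i k) (y i k)) ->
  hull p N (X s) (y i).
Proof.
move=> hi hc. apply: (@hull_closed _ _ _ (fun t => X (s + t) i)).
  move=> t. exact: nested.
apply: cvg_cluster => k hk. exact: (cvg_shiftn s (hc k hk)).
Qed.

Lemma v_in_hull (y : nat -> vec) (v : vec) :
  (forall i k, (i < N)%N -> cvg (fun t => X t i k) (y i k)) ->
  (forall t, hull p N (X t) v) -> hull p N y v.
Proof.
move=> hy hv.
have [lam hl] := functional_choice _ hv.
apply: (@hull_closed _ _ _ (fun t k => \sum_(j < N) lam t j * y j k)).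
  move=> t. have [h1 [h2 _]] := hl t. exists (lam t); split => //; split => //.
move=> eps he T.
have he2 : 0 < eps / 2 by apply: divr_gt0.
have [T0 hT0] := ev_all (P := fun j t => forall k, (k < p)%N -> `|X t j k - y j k| < eps / 2) (n := N)
  (fun j hj => ev_all (P := fun k t => `|X t j k - y j k| < eps / 2) (n := p)
     (fun k hk => hy j k hj (eps / 2) he2)).
exists (maxn T T0); split; first exact: leq_maxl.
move=> k hk. set t := maxn T T0.
have [h1 [h2 h3]] := hl t.
rewrite (h3 k hk) -sumrB.
apply: le_lt_trans (ler_norm_sum _ _ _) _.
apply: (@le_lt_trans _ _ (\sum_(j < N) lam t j * (eps / 2))).
  apply: ler_sum => j _. rewrite -mulrBr normrM ger0_norm; last exact: h1.
  apply: ler_wpM2l; first exact: h1.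
  rewrite distrC. apply: ltW. apply: hT0 => //. exact: leq_maxr.
rewrite -mulr_suml h2 mul1r. lra.
Qed.

End App.


Local Open Scope ring_scope.

Section Ext.
Variables (p : nat) (S : vec -> Prop) (v : vec).
Variable Nx : nat.
Variable Xs : nat -> nat -> vec.
Hypothesis hS : forall u, S u <-> forall t, hull p Nx (Xs t) u.
Hypothesis Hv : extreme_point p S v.

Lemma S_conv M (Y : nat -> vec) u : hull p M Y u -> (forall j, (j < M)%N -> S (Y j)) -> S u.
Proof.
move=> hu hY. apply/hS => t. apply: (hull_trans hu) => j hj. by have /hS := hY j hj; apply.
Qed.

Lemma ext_ind M : forall Y : nat -> vec, (forall j, (j < M)%N -> S (Y j)) -> hull p M Y v ->
  exists j, (j < M)%N /\ forall k, (k < p)%N -> v k = Y j k.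
Proof.
elim: M => [|M IH] Y hY [lam [h1 [h2 h3]]].
  by move: h2; rewrite big_ord0 => /eqP; rewrite eq_sym oner_eq0.
have hsum : \sum_(j < M) lam j + lam M = 1 by rewrite big_ord_recr /= in h2.
have hM0 : 0 <= \sum_(j < M) lam j.
  apply: sumr_ge0 => j _. apply: h1. exact: ltn_trans (ltn_ord j) (ltnSn M).
have hlM := h1 M (ltnSn M).
case: (eqVneq (lam M) 1) => e1.
  exists M; split => // k hk.
  have h0 : \sum_(j < M) lam j = 0 by lra.
  have hz : forall j : 'I_M, lam j = 0.
    have hnn : forall i : 'I_M, true -> 0 <= lam i.
      move=> i _. apply: h1. exact: ltn_trans (ltn_ord i) (ltnSn M).
    move=> j. by apply: (psumr_eq0P hnn h0).
  rewrite h3 // big_ord_recr /= e1 mul1r big1 ?add0r // => j _. by rewrite hz mul0r.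
case: (eqVneq (lam M) 0) => e0.
  have [j [hj hjv]] : exists j, (j < M)%N /\ forall k, (k < p)%N -> v k = Y j k.
    apply: IH.
      move=> j hj; apply: hY; exact: ltn_trans hj (ltnSn M).
    exists lam; split.
      move=> j hj; apply: h1; exact: ltn_trans hj (ltnSn M).
    split; first by rewrite e0 addr0 in hsum.
    move=> k hk. rewrite h3 // big_ord_recr /= e0 mul0r addr0. done.
  exists j; split => //. exact: ltn_trans hj (ltnSn M).
have hpos : 0 < lam M by rewrite lt_neqAle eq_sym e0 hlM.
have hlt1 : lam M < 1 by rewrite lt_neqAle e1 /=; lra.
set s := lam M in hpos hlt1 e0 e1 hsum hlM.
have hne : 1 - s != 0 by apply/negP => /eqP h; lra.
pose u k := \sum_(j < M) (lam j / (1 - s)) * Y j k.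
have hu : hull p M Y u.
  exists (fun j => lam j / (1 - s)). split.
    move=> j hj. apply: divr_ge0; last lra. apply: h1. exact: ltn_trans hj (ltnSn M).
  split => //.
  rewrite -mulr_suml. have -> : \sum_(j < M) lam j = 1 - s by lra.
  by rewrite mulfV.
have hSu : S u.
  apply: (S_conv hu) => j hj; apply: hY; exact: ltn_trans hj (ltnSn M).
have hSY : S (Y M) by apply: hY.
case: Hv => _ hext.
have hs' : Rlt 0 s /\ Rlt s 1 by split; apply/RltP.
have hveq : veq p v (fun k => (s * Y M k + (1 - s) * u k)%R).
  move=> k /ssrnat.ltP hk. rewrite h3 // big_ord_recr /= /u.

  rewrite mulr_sumr. rewrite addrC. congr (_ + _).
  apply: eq_bigr => j _. field. exact: hne.
have [hA _] := hext _ _ _ hSY hSu hs' hveq.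
exists M; split => // k hk. symmetry. apply: hA. exact/ssrnat.ltP.
Qed.

End Ext.


Lemma cvg_Un (u : nat -> R) L : cvg u L -> Un_cv u L.
Proof.
move=> h eps /RltP he. have [T hT] := h eps he. exists T => t /ssrnat.leP ht.
rewrite RdistE. apply/RltP. exact: hT.
Qed.

Local Close Scope ring_scope.
Local Open Scope R_scope.

Theorem lemma2 (p N : nat) (x : nat -> vec) (w : nat -> R) (phi : R -> R)
  (Hw : forall j, lt j N -> Rlt 0 (w j))
  (Hf : PDD p phi)
  (v : vec)
  (Hv : extreme_point p (C1_set p N phi w x) v) :
  exists j, lt j N /\ vconv p (fun t : nat => bms p N phi w x t j) v.
Proof.
case: N Hw Hv => [|n] Hw Hv.
  exfalso. case: Hv => hv _. have [lam [_ [h _]]] := hv 0%N. simpl in h.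
  exact: R1_neq_R0 (esym h).
have Hw' : forall j, (j < n.+1)%N -> (0 < w j)%R.
  move=> j hj. apply/RltP. apply: Hw. exact/ssrnat.ltP.
have [y hy] := @y_ex p n phi w x Hw' Hf.
set S := C1_set p n.+1 phi w x.
have hS : forall u, S u <-> forall t, hull p n.+1 (X p n phi w x t) u.
  move=> u; split => h t.
    by apply/in_hullE; apply: h.
  by apply/in_hullE; apply: h.
have hyS : forall i, (i < n.+1)%N -> S (y i).
  move=> i hi. apply: (proj2 (hS (y i))) => s. apply: (y_in_hull Hw' Hf s hi). move=> k hk. exact: hy.
have hvh : hull p n.+1 y v.
  apply: (@v_in_hull p n phi w x y v) => //.
  move=> t. case: Hv => hv _. exact: (proj1 (hS v) hv t).
have [j [hj hjv]] := ext_ind hS Hv hyS hvh.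
exists j; split; first exact/ssrnat.ltP.
move=> k /ssrnat.ltP hk. rewrite (hjv k hk).
apply: cvg_Un. exact: (hy j k hj).
Qed.
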